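(* Let $0<\mu\le L$, $C>0$, and $0<\gamma<1$. Let $f_1,f_2,\dots:\mathbb{R}^d\to\mathbb{R}$ be differentiable functions, each $L$-smooth and $\mu$-strongly convex, whose minimizers $\mathbf{w}^*_t=\arg\min_{\mathbf{w}} f_t(\mathbf{w})$ satisfy $\|\mathbf{w}^*_t\|\le C$ for all $t\ge1$. Define $F_t(\mathbf{w})=\sum_{i=1}^t \frac{1-\gamma}{1-\gamma^t}\gamma^{t-i}f_i(\mathbf{w})$ and $\overline{\mathbf{w}}^*_t=\arg\min_{\mathbf{w}}F_t(\mathbf{w})$. Let $\eta$ satisfy $0<\eta\le\frac{2}{\mu+L}$ and $\eta\mu<1$, and let $E\ge1$ be an integer. Starting from arbitrary $\mathbf{w}_0\in\mathbb{R}^d$, for each $t\ge0$ set $\mathbf{w}_{t,0}=\mathbf{w}_t$, $\mathbf{w}_{t,k+1}=\mathbf{w}_{t,k}-\eta\nabla F_{t+1}(\mathbf{w}_{t,k})$ for $k=0,\dots,E-1$, and $\mathbf{w}_{t+1}=\mathbf{w}_{t,E}$. Let $C'=\left(1+\sqrt{L/\mu}\right)\frac{LC}{\mu}$ and let $\epsilon>0$. If $$E\ge\frac{\ln\left(\frac{\epsilon}{C'(1-\gamma)+\epsilon}\right)}{\ln(1-\eta\mu)},$$ then $\limsup_{t\to\infty}\|\mathbf{w}_t-\overline{\mathbf{w}}^*_t\|\le\epsilon$. Consequently, the number of gradient updates per time step needed to achieve asymptotic tracking error at most $\epsilon$ is $\mathcal{O}(\ln(1/\epsilon))$ as $\ep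silon\to0$.
   Context: A function $f$ is $L$-smooth if $\|\nabla f(\mathbf{x})-\nabla f(\mathbf{y})\|\le L\|\mathbf{x}-\mathbf{y}\|$ for all $\mathbf{x},\mathbf{y}$, and $\mu$-strongly convex if $f(\mathbf{y})\ge f(\mathbf{x})+\nabla f(\mathbf{x})^\top(\mathbf{y}-\mathbf{x})+\frac{\mu}{2}\|\mathbf{y}-\mathbf{x}\|^2$ for all $\mathbf{x},\mathbf{y}$. The quantity $\limsup_{t\to\infty}\|\mathbf{w}_t-\overline{\mathbf{w}}^*_t\|$ is called the asymptotic tracking error. *)

(* Defs.v *)
From HB Require Import structures.
From mathcomp Require Import all_boot all_order all_algebra.
From mathcomp Require Import all_classical all_reals all_analysis.
Set Implicit Arguments. Unset Strict Implicit. Unset Printing Implicit Defensive.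
Import Order.TTheory GRing.Theory Num.Theory.
Import numFieldNormedType.Exports.
Local Open Scope ring_scope.

Section Defs.
Variables (R : realType) (d : nat).
Notation vec := 'rV[R]_d.

Definition dotv (u v : vec) : R := \sum_(i < d) u ord0 i * v ord0 i.
Definition enorm (u : vec) : R := Num.sqrt (dotv u u).

Definition grad (f : vec -> R) (x : vec) : vec :=
  \row_(i < d) ('d f x : vec -> R) (delta_mx ord0 i).

Definition L_smooth (L : R) (f : vec -> R) : Prop :=
  forall x y, enorm (grad f x - grad f y) <= L * enorm (x - y).

Definition strongly_convex (mu : R) (f : vec -> R) : Prop :=
  forall x y, f x + dotv (grad f x) (y - x) + mu / 2 * enorm (y - x) ^+ 2 <= f y.

Definition is_minimizer (f : vec -> R) (w : vec) : Prop :=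
  forall v, f w <= f v.

Definition Favg (gamma : R) (f : nat -> vec -> R) (t : nat) (w : vec) : R :=
  \sum_(1 <= i < t.+1) ((1 - gamma) / (1 - gamma ^+ t) * gamma ^+ (t - i) * f i w).

Definition gd_steps (eta : R) (F : vec -> R) (E : nat) (w : vec) : vec :=
  iter E (fun v => v - eta *: grad F v) w.
End Defs.

Definition Cprime (R : realType) (mu L C : R) : R :=
  (1 + Num.sqrt (L / mu)) * (L * C / mu).

Definition E_threshold (R : realType) (mu L C gamma eta eps : R) : R :=
  ln (eps / (Cprime mu L C * (1 - gamma) + eps)) / ln (1 - eta * mu).

(* Main.v *)
Require Import Defs.
From HB Require Import structures.
From mathcomp Require Import all_boot all_order all_algebra.
From mathcomp Require Import all_classical all_reals all_analysis.
From mathcomp Require Import ring lra.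
Import Order.TTheory GRing.Theory Num.Theory.
Import numFieldNormedType.Exports.
Local Open Scope ring_scope.
Set Implicit Arguments. Unset Strict Implicit. Unset Printing Implicit Defensive.
Section Dot.
Variables (R : realType) (d : nat).
Notation vec := 'rV[R]_d.
Implicit Types u v w : vec.

Lemma dotvC u v : dotv u v = dotv v u.
Proof. by apply: eq_bigr => i _; rewrite mulrC. Qed.
Lemma dotvDl u v w : dotv (u + v) w = dotv u w + dotv v w.
Proof. by rewrite /dotv -big_split; apply: eq_bigr => i _; rewrite mxE mulrDl. Qed.
Lemma dotvDr u v w : dotv w (u + v) = dotv w u + dotv w v.
Proof. by rewrite dotvC dotvDl !(dotvC w). Qed.
Lemma dotvZl (a : R) u v : dotv (a *: u) v = a * dotv u v.
Proof. by rewrite /dotv mulr_sumr; apply: eq_bigr => i _; rewrite mxE mulrA. Qed.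
Lemma dotvZr (a : R) u v : dotv v (a *: u) = a * dotv v u.
Proof. by rewrite dotvC dotvZl dotvC. Qed.
Lemma dotvNl u v : dotv (- u) v = - dotv u v.
Proof. by rewrite -scaleN1r dotvZl mulN1r. Qed.
Lemma dotvNr u v : dotv v (- u) = - dotv v u.
Proof. by rewrite dotvC dotvNl dotvC. Qed.
Lemma dotvBl u v w : dotv (u - v) w = dotv u w - dotv v w.
Proof. by rewrite dotvDl dotvNl. Qed.
Lemma dotvBr u v w : dotv w (u - v) = dotv w u - dotv w v.
Proof. by rewrite dotvDr dotvNr. Qed.
Lemma dotv0l v : dotv 0 v = 0.
Proof. by rewrite -(scale0r 0) dotvZl mul0r. Qed.
Lemma dotv0r v : dotv v 0 = 0.
Proof. by rewrite dotvC dotv0l. Qed.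
Lemma dotv_ge0 u : 0 <= dotv u u.
Proof. by apply: sumr_ge0 => i _; rewrite -expr2 sqr_ge0. Qed.
Lemma dotv_sumr (I : Type) (r : seq I) (P : pred I) (F : I -> vec) v :
  dotv v (\sum_(i <- r | P i) F i) = \sum_(i <- r | P i) dotv v (F i).
Proof.
elim/big_rec2: _ => [|i y1 y2 _ <-]; first by rewrite dotv0r.
by rewrite dotvDr.
Qed.
Lemma enorm_ge0 u : 0 <= enorm u.
Proof. exact: sqrtr_ge0. Qed.
Lemma enorm2 u : enorm u ^+ 2 = dotv u u.
Proof. by rewrite sqr_sqrtr // dotv_ge0. Qed.
Lemma enorm_eq0 u : enorm u = 0 -> u = 0.
Proof.
move=> h; have : dotv u u = 0 by rewrite -enorm2 h expr0n.
move=> /eqP; rewrite psumr_eq0; last by move=> i _; rewrite -expr2 sqr_ge0.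
move=> /allP H; apply/rowP => i; rewrite mxE.
by have /(_ (mem_index_enum i)) := H i; rewrite implyTb mulf_eq0 orbb => /eqP.
Qed.
Lemma enorm0 : enorm (0 : vec) = 0.
Proof. by rewrite /enorm dotv0l sqrtr0. Qed.
Lemma enormZ (a : R) u : enorm (a *: u) = `|a| * enorm u.
Proof.
by rewrite /enorm dotvZl dotvZr mulrA -expr2 sqrtrM ?sqr_ge0 // sqrtr_sqr.
Qed.
Lemma enormN u : enorm (- u) = enorm u.
Proof. by rewrite -scaleN1r enormZ normrN normr1 mul1r. Qed.
Lemma enormB u v : enorm (u - v) = enorm (v - u).
Proof. by rewrite -enormN opprB. Qed.

Lemma CS u v : dotv u v <= enorm u * enorm v.
Proof.
have [a0|an0] := eqVneq (enorm u) 0.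
  by rewrite (enorm_eq0 a0) dotv0l enorm0 mul0r.
have [b0|bn0] := eqVneq (enorm v) 0.
  by rewrite (enorm_eq0 b0) dotv0r enorm0 mulr0.
set a := enorm u; set b := enorm v.
have a0 : 0 < a by rewrite lt_def an0 enorm_ge0.
have b0 : 0 < b by rewrite lt_def bn0 enorm_ge0.
have := dotv_ge0 (b *: u - a *: v).
rewrite !(dotvBl, dotvBr, dotvZl, dotvZr) -!enorm2 -/a -/b (dotvC v u) => H.
have H2 : a * b * dotv u v <= a * b * (a * b).
  by nra.
by rewrite -(ler_pM2l (mulr_gt0 a0 b0)).
Qed.
Lemma CSabs u v : `|dotv u v| <= enorm u * enorm v.
Proof.
rewrite ler_norml CS andbT lerNl -dotvNl.
by apply: le_trans (CS _ _) _; rewrite enormN.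
Qed.
Lemma enormD2 u v : enorm (u + v) ^+ 2 = enorm u ^+ 2 + 2 * dotv u v + enorm v ^+ 2.
Proof. by rewrite !enorm2 !(dotvDl, dotvDr) (dotvC v u); ring. Qed.
Lemma enormB2 u v : enorm (u - v) ^+ 2 = enorm u ^+ 2 - 2 * dotv u v + enorm v ^+ 2.
Proof. by rewrite enormD2 enormN dotvNr; ring. Qed.
Lemma enormD u v : enorm (u + v) <= enorm u + enorm v.
Proof.
rewrite -ler_sqr ?nnegrE ?addr_ge0 ?enorm_ge0 // enormD2.
rewrite sqrrD lerD2r lerD2l; have := CS u v; nra.
Qed.
Lemma enorm_tri u v w : enorm (u - w) <= enorm (u - v) + enorm (v - w).
Proof. have -> : u - w = (u - v) + (v - w) by rewrite addrA subrK. exact: enormD. Qed.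
Lemma mxnorm_le_enorm u : `|u| <= enorm u.
Proof.
have -> : `|u| = mx_norm u by []. rewrite mx_normrE; apply/bigmax_leP; split; first exact: enorm_ge0.
move=> [i j] _ /=; rewrite (ord1 i).
rewrite -ler_sqr ?nnegrE ?enorm_ge0 // enorm2 real_normK ?num_real //.
rewrite /dotv (bigD1 j) //= -expr2 lerDl; apply: sumr_ge0 => k _; by rewrite -expr2 sqr_ge0.
Qed.
End Dot.
Section Grad.
Variables (R : realType) (d : nat).
Notation vec := 'rV[R]_d.
Implicit Types u v w x : vec.

Lemma diff_dotv (f : vec -> R) x v : differentiable f x ->
  'd f x v = dotv (grad f x) v.
Proof.
move=> _; rewrite {1}(row_sum_delta v) linear_sum /dotv.
apply: eq_bigr => j _; rewrite linearZ /= mxE mulrC; congr (_ * _).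
Qed.

Lemma diff_sumseq (r : seq nat) (h : nat -> vec -> R) x :
  (forall i, i \in r -> differentiable (h i) x) ->
  differentiable (fun w => \sum_(i <- r) h i w) x /\
  forall v, 'd (fun w => \sum_(i <- r) h i w) x v = \sum_(i <- r) 'd (h i) x v.
Proof.
elim: r => [|a r IH] H.
  have -> : (fun w : vec => \sum_(i <- [::]) h i w) = cst 0.
    by apply/funext => w; rewrite big_nil.
  split; first exact: differentiable_cst.
  by move=> v; rewrite diff_cst big_nil.
have [IH1 IH2] : differentiable (fun w => \sum_(i <- r) h i w) x /\
  forall v, 'd (fun w => \sum_(i <- r) h i w) x v = \sum_(i <- r) 'd (h i) x v.
  by apply: IH => i ir; apply: H; rewrite inE ir orbT.
have Ha : differentiable (h a) x by apply: H; rewrite inE eqxx.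
have -> : (fun w => \sum_(i <- a :: r) h i w) = h a + (fun w => \sum_(i <- r) h i w).
  by apply/funext => w; rewrite big_cons.
split; first exact: differentiableD.
by move=> v; rewrite diffD //= IH2 big_cons.
Qed.

Lemma diff_scale (c : R) (g : vec -> R) x : differentiable g x ->
  differentiable (fun w => c * g w) x /\ forall v, 'd (fun w => c * g w) x v = c * 'd g x v.
Proof.
move=> dg; have -> : (fun w => c * g w) = c *: g by apply/funext.
split; first exact: differentiableZ.
by move=> v; rewrite diffZ.
Qed.

Lemma grad_lin (r : seq nat) (c : nat -> R) (h : nat -> vec -> R) x :
  (forall i, i \in r -> differentiable (h i) x) ->
  differentiable (fun w => \sum_(i <- r) c i * h i w) x /\
  grad (fun w => \sum_(i <- r) c i * h i w) x = \sum_(i <- r) c i *: grad (h i) x.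
Proof.
move=> H.
have H' : forall i, i \in r -> differentiable (fun w => c i * h i w) x.
  by move=> i /H /(diff_scale (c i)) [].
have [D1 D2] := diff_sumseq H'.
split => //; apply/rowP => j; rewrite !mxE D2 summxE.
apply: eq_big_seq => i ir; have [_ ->] := diff_scale (c i) (H i ir).
by rewrite !mxE.
Qed.
End Grad.
Section Descent.
Variables (R : realType) (d : nat).
Notation vec := 'rV[R]_d.
Implicit Types u v w x y : vec.

Lemma line_derive (f : vec -> R) x v (s : R) :
  (forall z, differentiable f z) ->
  is_derive s 1 (fun t : R => f (x + t *: v)) (dotv (grad f (x + s *: v)) v).
Proof.
move=> df.
have E : (fun h : R => h^-1 *: (((fun t : R => f (x + t *: v)) \o shift s) (h *: 1)
      - (fun t => f (x + t *: v)) s)) =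
    (fun h : R => h^-1 *: ((f \o shift (x + s *: v)) (h *: v) - f (x + s *: v))).
  apply/funext => h /=; congr (_ *: (f _ - _)).
  have -> : h%:A = h :> R by rewrite /GRing.scale /= mulr1.
  by rewrite scalerDl addrCA addrA.
have Hd : derivable (fun t : R => f (x + t *: v)) s 1.
  by rewrite /derivable E; apply: diff_derivable.
apply: DeriveDef => //.
by rewrite /derive E -/(derive f _ v) deriveE // diff_dotv.
Qed.

Lemma descent (f : vec -> R) (L : R) x y :
  (forall z, differentiable f z) -> L_smooth L f ->
  f y <= f x + dotv (grad f x) (y - x) + L / 2 * enorm (y - x) ^+ 2.
Proof.
move=> df Ls.
set v := y - x; set c := dotv (grad f x) v; set k := L / 2 * enorm v ^+ 2.
set phi := (fun t : R => f (x + t *: v)).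
set psi := phi - c \*: (id : R -> R) - k \*: ((id : R -> R) * id).
have dpsi : forall s : R, is_derive s 1 psi
   (dotv (grad f (x + s *: v)) v - c *: 1 - k *: (s *: 1 + s *: 1)).
  move=> s; have HH := (is_deriveB (is_deriveB (line_derive x v s df)
     (is_deriveZ c (is_derive_id s 1)))
     (is_deriveZ k (is_deriveM (is_derive_id s 1) (is_derive_id s 1)))).
  exact HH.
have der : forall s, derivable psi s 1 by move=> s; case: (dpsi s).
have cont := @derivable_within_continuous R R psi `[0, 1]%R (fun s _ => der s).
have key := @ler0_derive1_nincr R psi 0 1 (fun s _ => der s) _ cont 0 1 (lexx _) ler01 (lexx _).
have : psi 1 <= psi 0.
  apply: key => s; rewrite in_itv /= => /andP[s0 s1].
  rewrite derive1E derive_val.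
  have e1 : forall a : R, a%:A = a by move=> a; rewrite /GRing.scale /= mulr1.
  have e2 : forall a b : R, a *: b = a * b by [].
  rewrite !e1 e2 /c /k.
  have H1 : dotv (grad f (x + s *: v)) v - dotv (grad f x) v
         <= L * s * enorm v ^+ 2.
    rewrite -dotvBl; apply: le_trans (CS _ _) _.
    apply: le_trans (ler_wpM2r (enorm_ge0 _) (Ls _ _)) _.
    rewrite addrAC subrr add0r enormZ ger0_norm; last exact: ltW s0.
    rewrite expr2 le_eqVlt; apply/orP; left; apply/eqP; ring.
  have -> : L / 2 * enorm v ^+ 2 * (s + s) = L * s * enorm v ^+ 2 by field.
  by rewrite subr_le0.
have E : forall t, psi t = f (x + t *: v) - c * t - k * (t * t) by [].
rewrite !E scale0r addr0 scale1r /v [x + _]addrC subrK !mulr0 !mulr1 !subr0.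
lra.
Qed.
End Descent.
Section GD.
Variables (R : realType) (d : nat).
Notation vec := 'rV[R]_d.
Implicit Types u v w x y : vec.

Lemma dot_exp (g e : vec) (a b c k : R) :
  dotv (a *: g + b *: e) (c *: g + k *: e) =
  a * c * dotv g g + (a * k + b * c) * dotv g e + b * k * dotv e e.
Proof.
rewrite !(dotvDl, dotvDr, dotvZl, dotvZr) (dotvC e g); ring.
Qed.

Lemma dot_lin (g e : vec) (a b : R) :
  dotv g (a *: g + b *: e) = a * dotv g g + b * dotv g e.
Proof. by rewrite dotvDr !dotvZr. Qed.

Lemma grad_min0 (F : vec -> R) (L : R) xs :
  0 < L -> (forall z, differentiable F z) -> L_smooth L F ->
  is_minimizer F xs -> grad F xs = 0.
Proof.
move=> L0 dF LF Hm; set g := grad F xs.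
have H := descent xs (xs - L^-1 *: g) dF LF.
have E1 : xs - L^-1 *: g - xs = (- L^-1) *: g + 0 *: g.
  by apply/rowP => i; rewrite !mxE; ring.
rewrite -/g E1 enorm2 dot_exp dotvDr !dotvZr in H.
have H2 := Hm (xs - L^-1 *: g).
have H3 : L^-1 / 2 * dotv g g <= 0.
  have E : L / 2 * (- L^-1 * - L^-1 * dotv g g + (- L^-1 * 0 + 0 * - L^-1) * dotv g g +
      0 * 0 * dotv g g) = L^-1 / 2 * dotv g g by field; rewrite gt_eqF.
  lra.
have Li : 0 < L^-1 / 2 by rewrite divr_gt0 ?invr_gt0.
apply: enorm_eq0; apply/eqP; rewrite -sqrf_eq0 enorm2 eq_le dotv_ge0 andbT.
by rewrite -(pmulr_rle0 _ Li).
Qed.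

Lemma gd_step (F : vec -> R) (mu L eta : R) x xs :
  0 < mu -> mu <= L -> 0 < eta -> eta <= 2 / (mu + L) -> eta * mu < 1 ->
  (forall z, differentiable F z) -> L_smooth L F -> strongly_convex mu F ->
  is_minimizer F xs ->
  enorm (x - eta *: grad F x - xs) <= (1 - eta * mu) * enorm (x - xs).
Proof.
move=> mu0 muL eta0 etaL etamu dF LF SF Hm.
have L0 : 0 < L by apply: lt_le_trans muL.
have g0 := grad_min0 L0 dF LF Hm.
set g := grad F x; set e := x - xs.
set s := eta / (2 * (1 - eta * mu)).
have om0 : 0 < 1 - eta * mu by rewrite subr_gt0.
have hs : s * (2 * (1 - eta * mu)) = eta.
  by rewrite /s; field; rewrite gt_eqF.
have s0 : 0 <= s by rewrite /s divr_ge0 // ?ltW // mulr_gt0.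
set q := g - mu *: e.
set w := xs + s *: q; set z := x - s *: q.
have H1 := SF x w; have H2 := descent xs w dF LF.
have H3 := descent x z dF LF; have H4 := SF xs z.
rewrite g0 dotv0l in H2 H4.
have Ew1 : w - x = s *: g + (- (s * mu) - 1) *: e.
  by apply/rowP => i; rewrite /w /q /e !mxE; ring.
have Ew2 : w - xs = s *: g + (- (s * mu)) *: e.
  by apply/rowP => i; rewrite /w /q /e !mxE; ring.
have Ez1 : z - x = (- s) *: g + (s * mu) *: e.
  by apply/rowP => i; rewrite /z /q /e !mxE; ring.
have Ez2 : z - xs = (- s) *: g + (1 + s * mu) *: e.
  by apply/rowP => i; rewrite /z /q /e !mxE; ring.
have Eq : q = 1 *: g + (- mu) *: e.
  by apply/rowP => i; rewrite /q !mxE; ring.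
have Eg : x - eta *: g - xs = (- eta) *: g + 1 *: e.
  by apply/rowP => i; rewrite /e !mxE; ring.
rewrite -/g Ew1 Ez1 in H1 H3.
rewrite Ew2 in H2; rewrite Ez2 in H4.
rewrite !enorm2 !dot_exp ?dot_lin !dotv0l in H1 H2 H3 H4.
set A := dotv g g in H1 H2 H3 H4; set B := dotv g e in H1 H2 H3 H4.
set Cc := dotv e e in H1 H2 H3 H4.
have K1 : (2 * s - (L - mu) * s ^+ 2) * (A - 2 * mu * B + mu ^+ 2 * Cc) <= B - mu * Cc.
  lra.
have qq : 0 <= A - 2 * mu * B + mu ^+ 2 * Cc.
  have := dotv_ge0 q; rewrite {1 2}Eq dot_exp -/A -/B -/Cc.
  move=> h; apply: le_trans h _; rewrite le_eqVlt; apply/orP; left; apply/eqP; ring.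
have etaL2 : eta * (mu + L) <= 2.
  by rewrite -(ler_pdivlMr _ _ (addr_gt0 mu0 L0)).
have Ms : (L - mu) * s <= 1.
  rewrite -(ler_pM2r (mulr_gt0 (ltr0Sn _ 1) om0)) -mulrA hs mul1r.
  nra.
have K2 : eta * (A - 2 * mu * B + mu ^+ 2 * Cc) <= 2 * (1 - eta * mu) * (B - mu * Cc).
  have E3 : 2 * (1 - eta * mu) * (2 * s - (L - mu) * s ^+ 2) = eta * (2 - (L - mu) * s).
    rewrite -[in RHS]hs; ring.
  have K3 := ler_wpM2l (ltW (mulr_gt0 (ltr0Sn _ 1) om0)) K1.
  rewrite mulrA E3 in K3.
  apply: (le_trans _ K3).
  have : 0 <= eta * (1 - (L - mu) * s) * (A - 2 * mu * B + mu ^+ 2 * Cc).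
    by apply: mulr_ge0 => //; apply: mulr_ge0; [exact: ltW|lra].
  nra.
have ee : enorm e ^+ 2 = Cc by rewrite enorm2.
have n1 : 0 <= enorm (x - eta *: g - xs) by exact: enorm_ge0.
have n2 : 0 <= (1 - eta * mu) * enorm e by apply: mulr_ge0; [exact: ltW|exact: enorm_ge0].
rewrite -ler_sqr ?nnegrE //.
rewrite Eg enorm2 dot_exp -/A -/B -/Cc exprMn ee.
have K4 := ler_wpM2l (ltW eta0) K2.
lra.
Qed.

Lemma gd_iter (F : vec -> R) (mu L eta : R) (E : nat) x xs :
  0 < mu -> mu <= L -> 0 < eta -> eta <= 2 / (mu + L) -> eta * mu < 1 ->
  (forall z, differentiable F z) -> L_smooth L F -> strongly_convex mu F ->
  is_minimizer F xs ->
  enorm (gd_steps eta F E x - xs) <= (1 - eta * mu) ^+ E * enorm (x - xs).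
Proof.
move=> mu0 muL eta0 etaL etamu dF LF SF Hm.
elim: E => [|E IH]; first by rewrite expr0 mul1r.
rewrite /gd_steps iterS -/(gd_steps eta F E x).
apply: le_trans (gd_step _ mu0 muL eta0 etaL etamu dF LF SF Hm) _.
rewrite exprS -mulrA ler_wpM2l // subr_ge0 ltW //.
Qed.

Lemma strong_mono (F : vec -> R) (mu L : R) a b :
  0 < mu -> mu <= L ->
  (forall z, differentiable F z) -> L_smooth L F -> strongly_convex mu F ->
  is_minimizer F b -> mu * enorm (a - b) <= enorm (grad F a).
Proof.
move=> mu0 muL dF LF SF Hm.
have L0 : 0 < L by apply: lt_le_trans muL.
have g0 := grad_min0 L0 dF LF Hm.
have H1 := SF a b; have H2 := SF b a.
rewrite g0 dotv0l in H2; rewrite enormB in H1.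
have H3 : mu * enorm (a - b) ^+ 2 <= dotv (grad F a) (a - b).
  have -> : dotv (grad F a) (a - b) = - dotv (grad F a) (b - a).
    by rewrite -dotvNr opprB.
  lra.
have H4 := CS (grad F a) (a - b).
have [z0|zn0] := eqVneq (enorm (a - b)) 0.
  by rewrite z0 mulr0 enorm_ge0.
have zp : 0 < enorm (a - b) by rewrite lt_def zn0 enorm_ge0.
rewrite -(ler_pM2r zp); nra.
Qed.

Section ExMin.
Local Open Scope classical_set_scope.
Lemma exists_min (F : vec -> R) (mu : R) :
  0 < mu -> (forall z, differentiable F z) -> strongly_convex mu F ->
  exists xs, is_minimizer F xs.
Proof.
move=> mu0 dF SF.
set A := [set x : vec | F x <= F 0].
have A0 : A !=set0 by exists 0; rewrite /A /=.
have cA : compact A.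
  apply: bounded_closed_compact.
    rewrite /bounded_set /= /bounded_near.
    near=> M => x Ax /=.
    apply: le_trans (mxnorm_le_enorm x) _.
    have H := SF 0 x; rewrite subr0 /A /= in Ax H.
    have H2 := CSabs (grad F 0) x.
    have : mu / 2 * enorm x ^+ 2 <= enorm (grad F 0) * enorm x.
      have := ler_norm (- dotv (grad F 0) x); rewrite normrN => h; lra.
    move=> H3.
    have B : enorm x <= 2 / mu * enorm (grad F 0).
      have [z0|zn0] := eqVneq (enorm x) 0.
        by rewrite z0 mulr_ge0 ?enorm_ge0 // divr_ge0 // ltW.
      have zp : 0 < enorm x by rewrite lt_def zn0 enorm_ge0.
      rewrite -(ler_pM2r zp) -(ler_pM2l (divr_gt0 mu0 (ltr0Sn _ 1))).
      have -> : mu / 2 * (2 / mu * enorm (grad F 0) * enorm x) =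
        enorm (grad F 0) * enorm x by field; rewrite gt_eqF.
      by rewrite -expr2.
    apply: le_trans B _.
    near: M; apply: nbhs_pinfty_ge; exact: num_real.
  have -> : A = F @^-1` [set r | r <= F 0] by [].
  apply: preimage_closed; last exact: closed_le.
  move=> x _; exact: differentiable_continuous.
have cF : {within A, continuous F}.
  apply: continuous_subspaceT => x; exact: differentiable_continuous.
have [c cA' Hc] := EVT_min_rV A0 cA cF.
exists c => v.
have [vA|vnA] := boolP (v \in A); first exact: Hc.
rewrite inE /A /= in cA'.
have : ~ (F v <= F 0) by move=> h; move/negP: vnA; apply; rewrite inE.
move/negP; rewrite -ltNge => h; apply: le_trans cA' (ltW h).
Unshelve. all: by end_near.
Qed.
End ExMin.
End GD.
Section Comb.
Variables (R : realType) (d : nat).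
Notation vec := 'rV[R]_d.
Implicit Types u v w x y : vec.

Lemma dotv_suml (r : seq nat) (F : nat -> vec) v :
  dotv (\sum_(i <- r) F i) v = \sum_(i <- r) dotv (F i) v.
Proof. by rewrite dotvC dotv_sumr; apply: eq_bigr => i _; rewrite dotvC. Qed.

Lemma enorm_sum (r : seq nat) (F : nat -> vec) :
  enorm (\sum_(i <- r) F i) <= \sum_(i <- r) enorm (F i).
Proof.
elim/big_rec2: _ => [|i y1 y2 _ H]; first by rewrite enorm0.
by apply: le_trans (enormD _ _) _; rewrite lerD2l.
Qed.

Lemma comb_props (r : seq nat) (c : nat -> R) (h : nat -> vec -> R) (mu L : R) :
  (forall i, i \in r -> 0 <= c i) -> \sum_(i <- r) c i = 1 ->
  (forall i, i \in r -> forall z, differentiable (h i) z) ->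
  (forall i, i \in r -> L_smooth L (h i)) ->
  (forall i, i \in r -> strongly_convex mu (h i)) ->
  let G := fun w => \sum_(i <- r) c i * h i w in
  [/\ forall z, differentiable G z,
      forall z, grad G z = \sum_(i <- r) c i *: grad (h i) z,
      L_smooth L G & strongly_convex mu G].
Proof.
move=> c0 c1 dh Lh Sh G.
have gl : forall z, differentiable G z /\ grad G z = \sum_(i <- r) c i *: grad (h i) z.
  by move=> z; apply: grad_lin => i ir; exact: dh.
split.
- by move=> z; case: (gl z).
- by move=> z; case: (gl z).
- move=> x y; rewrite (proj2 (gl x)) (proj2 (gl y)) -sumrB.
  apply: le_trans (enorm_sum _ _) _.
  have -> : L * enorm (x - y) = \sum_(i <- r) c i * (L * enorm (x - y)).
    by rewrite -mulr_suml c1 mul1r.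
  rewrite big_seq_cond [X in _ <= X]big_seq_cond; apply: ler_sum => i /andP[ir _].
  rewrite -scalerBr enormZ ger0_norm ?c0 //; apply: ler_wpM2l; first exact: c0.
  exact: Lh.
- move=> x y; rewrite (proj2 (gl x)) dotv_suml /G.
  have -> : mu / 2 * enorm (y - x) ^+ 2 = \sum_(i <- r) c i * (mu / 2 * enorm (y - x) ^+ 2).
    by rewrite -mulr_suml c1 mul1r.
  rewrite -!big_split /=.
  rewrite big_seq_cond [X in _ <= X]big_seq_cond; apply: ler_sum => i /andP[ir _].
  rewrite dotvZl -!mulrDr; apply: ler_wpM2l; first exact: c0.
  exact: Sh.
Qed.
End Comb.
Section Wbar.
Variables (R : realType) (d : nat).
Notation vec := 'rV[R]_d.
Implicit Types u v w x y : vec.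

Lemma real_bound (mu L C X Y S P : R) :
  0 < mu -> mu <= L -> 0 <= C -> 0 <= X -> 0 <= Y ->
  mu * (X ^+ 2 - 2 * P + S) <= L * (S - Y ^+ 2) ->
  P <= X * Y -> S <= C ^+ 2 -> Y ^+ 2 <= S ->
  X <= Num.sqrt (L / mu) * C.
Proof.
move=> mu0 muL C0 X0 Y0 H1 H2 H3 H4.
have L0 : 0 < L by apply: lt_le_trans muL.
have key : mu * X ^+ 2 <= L * C ^+ 2.
  have H5 : mu * X ^+ 2 <= 2 * mu * X * Y + (L - mu) * C ^+ 2 - L * Y ^+ 2.
    have : mu * P <= mu * (X * Y) by rewrite ler_pM2l.
    have : (L - mu) * S <= (L - mu) * C ^+ 2 by rewrite ler_wpM2l // subr_ge0.
    nra.
  have [eL|nL] := eqVneq L mu.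
    rewrite eL in H5 *.
    have YC : Y <= C.
      by rewrite -ler_sqr ?nnegrE //; apply: le_trans H4 H3.
    have XY : X = Y.
      have : mu * (X - Y) ^+ 2 <= 0 by nra.
      rewrite pmulr_rle0 // => h; apply/eqP; rewrite -subr_eq0 -sqrf_eq0 eq_le h sqr_ge0.
      done.
    rewrite XY; apply: ler_wpM2l; first exact: ltW.
    by rewrite ler_sqr ?nnegrE.
  have Lm : 0 < L - mu by rewrite subr_gt0 lt_def muL andbT; apply: contraNneq nL => ->.
  have H6 : (L - mu) * (mu * X ^+ 2) <= (L - mu) * (L * C ^+ 2).
    have : 0 <= (mu * X - L * Y) ^+ 2 by apply: sqr_ge0.
    have : L * (mu * X ^+ 2) <= L * (2 * mu * X * Y + (L - mu) * C ^+ 2 - L * Y ^+ 2).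
      by rewrite ler_pM2l.
    nra.
  by rewrite ler_pM2l in H6.
have -> : X = Num.sqrt (X ^+ 2) by rewrite sqrtr_sqr ger0_norm.
have mu0' := ltW mu0; have L0' := ltW L0.
have Lmu : 0 <= L / mu by rewrite divr_ge0.
rewrite -[C]ger0_norm // -sqrtr_sqr -sqrtrM // ler_sqrt; last by rewrite mulr_ge0 // sqr_ge0.
rewrite -(ler_pM2l mu0).
have -> : mu * (L / mu * C ^+ 2) = L * C ^+ 2 by field; rewrite gt_eqF.
exact: key.
Qed.
End Wbar.
Section Wbar2.
Variables (R : realType) (d : nat).
Notation vec := 'rV[R]_d.
Implicit Types u v w x y : vec.

Lemma wbar_bound (r : seq nat) (c : nat -> R) (h : nat -> vec -> R) (mu L C : R)
   (ws : nat -> vec) (wb : vec) :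
 0 < mu -> mu <= L -> 0 <= C ->
 (forall i, i \in r -> 0 <= c i) -> \sum_(i <- r) c i = 1 ->
 (forall i, i \in r -> forall z, differentiable (h i) z) ->
 (forall i, i \in r -> L_smooth L (h i)) ->
 (forall i, i \in r -> strongly_convex mu (h i)) ->
 (forall i, i \in r -> is_minimizer (h i) (ws i)) ->
 (forall i, i \in r -> enorm (ws i) <= C) ->
 is_minimizer (fun w => \sum_(i <- r) c i * h i w) wb ->
 enorm wb <= Num.sqrt (L / mu) * C.
Proof.
move=> mu0 muL C0 c0 c1 dh Lh Sh Mh Ch Mb.
have L0 : 0 < L by apply: lt_le_trans muL.
have g0 : forall i, i \in r -> grad (h i) (ws i) = 0.
  by move=> i ir; apply: (grad_min0 L0 (dh i ir) (Lh i ir) (Mh i ir)).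
set v := \sum_(i <- r) c i *: ws i.
have Hlow : \sum_(i <- r) c i * (h i (ws i) + mu / 2 * enorm (wb - ws i) ^+ 2)
    <= \sum_(i <- r) c i * h i wb.
  rewrite big_seq_cond [X in _ <= X]big_seq_cond; apply: ler_sum => i /andP[ir _].
  apply: ler_wpM2l; first exact: c0.
  have := Sh i ir (ws i) wb; rewrite g0 // dotv0l addr0; exact.
have Hup : \sum_(i <- r) c i * h i v <=
    \sum_(i <- r) c i * (h i (ws i) + L / 2 * enorm (v - ws i) ^+ 2).
  rewrite big_seq_cond [X in _ <= X]big_seq_cond; apply: ler_sum => i /andP[ir _].
  apply: ler_wpM2l; first exact: c0.
  have := descent (ws i) v (dh i ir) (Lh i ir); rewrite g0 // dotv0l addr0; exact.
have Hm := Mb v.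
set S := \sum_(i <- r) c i * enorm (ws i) ^+ 2.
have SX : forall u, \sum_(i <- r) c i * enorm (u - ws i) ^+ 2 = enorm u ^+ 2 - 2 * dotv u v + S.
  move=> u.
  have -> : dotv u v = \sum_(i <- r) c i * dotv u (ws i).
    by rewrite /v dotv_sumr; apply: eq_bigr => i _; rewrite dotvZr.
  have -> : enorm u ^+ 2 = \sum_(i <- r) c i * enorm u ^+ 2 by rewrite -mulr_suml c1 mul1r.
  rewrite mulr_sumr /S -!sumrB -big_split /=; apply: eq_bigr => i _.
  rewrite enormB2; ring.
have SB : \sum_(i <- r) c i * enorm (v - ws i) ^+ 2 = S - enorm v ^+ 2.
  by rewrite SX -enorm2; ring.
have SB0 : enorm v ^+ 2 <= S.
  rewrite -subr_ge0 -SB big_seq_cond; apply: sumr_ge0 => i /andP[ir _].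
  by apply: mulr_ge0; [exact: c0|exact: sqr_ge0].
have SC : S <= C ^+ 2.
  have -> : C ^+ 2 = \sum_(i <- r) c i * C ^+ 2 by rewrite -mulr_suml c1 mul1r.
  rewrite /S big_seq_cond [X in _ <= X]big_seq_cond; apply: ler_sum => i /andP[ir _].
  apply: ler_wpM2l; first exact: c0.
  by rewrite ler_sqr ?nnegrE ?enorm_ge0 //; exact: Ch.
have Hmain : mu * (enorm wb ^+ 2 - 2 * dotv wb v + S) <= L * (S - enorm v ^+ 2).
  rewrite -SX -SB.
  set a := \sum_(i <- r) c i * h i (ws i).
  have E1 : \sum_(i <- r) c i * (h i (ws i) + mu / 2 * enorm (wb - ws i) ^+ 2) =
     a + mu / 2 * \sum_(i <- r) c i * enorm (wb - ws i) ^+ 2.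
    by rewrite mulr_sumr -big_split; apply: eq_bigr => i _ /=; ring.
  have E2 : \sum_(i <- r) c i * (h i (ws i) + L / 2 * enorm (v - ws i) ^+ 2) =
     a + L / 2 * \sum_(i <- r) c i * enorm (v - ws i) ^+ 2.
    by rewrite mulr_sumr -big_split; apply: eq_bigr => i _ /=; ring.
  rewrite E1 in Hlow; rewrite E2 in Hup.
  have := le_trans Hlow (le_trans Hm Hup).
  lra.
apply: real_bound Hmain (CS _ _) SC SB0 => //; exact: enorm_ge0.
Qed.
End Wbar2.
Section FavgSec.
Variables (R : realType) (d : nat) (mu L C gamma : R) (f : nat -> 'rV[R]_d -> R).
Notation vec := 'rV[R]_d.
Hypotheses (mu0 : 0 < mu) (muL : mu <= L) (C0 : 0 < C) (ga0 : 0 < gamma) (ga1 : gamma < 1).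
Hypothesis df : forall t, (1 <= t)%N -> forall x, differentiable (f t) x.
Hypothesis Lf : forall t, (1 <= t)%N -> L_smooth L (f t).
Hypothesis Sf : forall t, (1 <= t)%N -> strongly_convex mu (f t).
Hypothesis Cf : forall t, (1 <= t)%N -> forall ws, is_minimizer (f t) ws -> enorm ws <= C.

Definition om (t i : nat) : R := (1 - gamma) / (1 - gamma ^+ t) * gamma ^+ (t - i).

Lemma geom t : (1 - gamma) * \sum_(1 <= i < t.+1) gamma ^+ (t - i) = 1 - gamma ^+ t.
Proof.
elim: t => [|t IH]; first by rewrite big_geq // mulr0 expr0 subrr.
rewrite big_nat_recr //= subnn expr0 mulrDr.
have -> : \sum_(1 <= i < t.+1) gamma ^+ (t.+1 - i) = gamma * \sum_(1 <= i < t.+1) gamma ^+ (t - i).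
  rewrite mulr_sumr; apply: eq_big_nat => i /andP[_ it].
  by rewrite subSn // exprS.
by rewrite mulrCA IH exprS; ring.
Qed.

Lemma gt_pos t : (1 <= t)%N -> 0 < 1 - gamma ^+ t.
Proof.
move=> t1; rewrite subr_gt0; case: t t1 => // t _.
by rewrite exprn_ilt1 // ltW.
Qed.

Lemma om_sum t : (1 <= t)%N -> \sum_(1 <= i < t.+1) om t i = 1.
Proof.
move=> t1; rewrite /om -mulr_sumr.
have h := gt_pos t1.
have := geom t; move: (\sum_(1 <= i < t.+1) gamma ^+ (t - i)) => S hS.
by rewrite mulrAC hS mulfV ?gt_eqF.
Qed.

Lemma om_ge0 t i : (1 <= t)%N -> 0 <= om t i.
Proof.
move=> t1; rewrite /om; apply: mulr_ge0; last by apply: exprn_ge0; exact: ltW.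
by apply: divr_ge0; [rewrite subr_ge0 ltW | exact: ltW (gt_pos t1)].
Qed.

Lemma Favg_props t : (1 <= t)%N ->
  [/\ forall z, differentiable (Favg gamma f t) z,
      forall z, grad (Favg gamma f t) z = \sum_(1 <= i < t.+1) om t i *: grad (f i) z,
      L_smooth L (Favg gamma f t) & strongly_convex mu (Favg gamma f t)].
Proof.
move=> t1.
have mem : forall i, i \in index_iota 1 t.+1 -> (1 <= i)%N.
  by move=> i; rewrite mem_index_iota => /andP[].
have := @comb_props R d (index_iota 1 t.+1) (om t) f mu L
  (fun i _ => om_ge0 i t1) (om_sum t1)
  (fun i ir => df (mem i ir)) (fun i ir => Lf (mem i ir)) (fun i ir => Sf (mem i ir)).
by [].
Qed.

Lemma grad_rec t a : (1 <= t)%N ->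
  grad (Favg gamma f t.+1) a = om t.+1 t.+1 *: grad (f t.+1) a +
    (gamma * (1 - gamma ^+ t) / (1 - gamma ^+ t.+1)) *: grad (Favg gamma f t) a.
Proof.
move=> t1.
have [_ G1 _ _] := Favg_props (isT : (1 <= t.+1)%N).
have [_ G2 _ _] := Favg_props t1.
rewrite G1 G2 big_nat_recr //= addrC; congr (_ + _).
rewrite scaler_sumr; apply: eq_big_nat => i /andP[_ it].
rewrite scalerA; congr (_ *: _).
have h1 := gt_pos t1; have h2 := gt_pos (isT : (1 <= t.+1)%N).
rewrite /om subSn // (exprS gamma (t - i)); field.
by rewrite !gt_eqF // h1 h2.
Qed.

Lemma ws_exists : exists ws : nat -> vec, forall i, (1 <= i)%N -> is_minimizer (f i) (ws i).
Proof.
have H : forall i : nat, exists w : vec, (1 <= i)%N -> is_minimizer (f i) w.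
  move=> i; case: (leqP 1 i) => [i1|i0].
    by have [w hw] := exists_min mu0 (df i1) (Sf i1); exists w.
  by exists 0.
have [ws hws] := choice H; by exists ws.
Qed.

Lemma wbar_norm t wb : (1 <= t)%N -> is_minimizer (Favg gamma f t) wb ->
  enorm wb <= Num.sqrt (L / mu) * C.
Proof.
move=> t1 Hm; have [ws hws] := ws_exists.
have mem : forall i, i \in index_iota 1 t.+1 -> (1 <= i)%N.
  by move=> i; rewrite mem_index_iota => /andP[].
apply: (@wbar_bound R d (index_iota 1 t.+1) (om t) f mu L C ws wb mu0 muL (ltW C0)
  (fun i _ => om_ge0 i t1) (om_sum t1)
  (fun i ir => df (mem i ir)) (fun i ir => Lf (mem i ir)) (fun i ir => Sf (mem i ir))
  (fun i ir => hws i (mem i ir)) (fun i ir => Cf (mem i ir) (hws i (mem i ir))) Hm).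
Qed.

Lemma D_bound t wb wb' : (1 <= t)%N ->
  is_minimizer (Favg gamma f t) wb -> is_minimizer (Favg gamma f t.+1) wb' ->
  enorm (wb - wb') <= om t.+1 t.+1 * (L * (Num.sqrt (L / mu) * C + C)) / mu.
Proof.
move=> t1 Hb Hb'.
have L0 : 0 < L by apply: lt_le_trans muL.
have [dG _ LG SG] := Favg_props (isT : (1 <= t.+1)%N).
have [dG0 _ LG0 SG0] := Favg_props t1.
have H := strong_mono wb mu0 muL dG LG SG Hb'.
rewrite grad_rec // (grad_min0 L0 dG0 LG0 Hb) scaler0 addr0 enormZ ger0_norm ?om_ge0 // in H.
have [ws hws] := ws_exists.
have t1' : (1 <= t.+1)%N by [].
have gws := grad_min0 L0 (df t1') (Lf t1') (hws _ t1').
have H2 : enorm (grad (f t.+1) wb) <= L * (Num.sqrt (L / mu) * C + C).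
  rewrite -[grad (f t.+1) wb]subr0 -gws.
  apply: le_trans (Lf t1' _ _) _; apply: ler_wpM2l; first exact: ltW.
  apply: le_trans (enorm_tri _ 0 _) _; rewrite subr0 sub0r enormN.
  apply: lerD; first exact: wbar_norm Hb.
  exact: Cf t1' _ (hws _ t1').
rewrite ler_pdivlMr // mulrC.
apply: le_trans H _; apply: ler_wpM2l; first exact: om_ge0.
exact: H2.
Qed.
End FavgSec.
Section Seq.
Variable R : realType.

Lemma geo_small (q eps : R) : 0 <= q -> q < 1 -> 0 < eps ->
  exists N, forall n, (N <= n)%N -> q ^+ n <= eps.
Proof.
move=> q0 q1 e0.
have qn : `|q| < 1 by rewrite ger0_norm.
have := @cvgr0_norm_lt _ _ _ _ _ (fun n : nat => q ^+ n) (cvg_expr qn) eps e0.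
move=> [N _ HN]; exists N => n Nn.
have := HN n Nn; rewrite /= => h; apply: ltW; apply: le_lt_trans h.
exact: ler_norm.
Qed.

Lemma seq_bound (e Dt : nat -> R) (rho B eps : R) (T0 : nat) :
  0 <= rho -> rho < 1 -> 0 < eps ->
  (forall t, (T0 <= t)%N -> e t.+1 <= rho * (e t + Dt t)) ->
  (forall dl, 0 < dl -> exists T, forall t, (T <= t)%N -> Dt t <= B + dl) ->
  rho * (B + eps) <= eps ->
  forall dl, 0 < dl -> exists N, forall t, (N <= t)%N -> e t <= eps + dl.
Proof.
move=> r0 r1 e0 Hrec HD Hthr dl dl0.
have r1' : 0 < 1 - rho by rewrite subr_gt0.
set dl' := dl * (1 - rho) / 2.
have dl'0 : 0 < dl' by rewrite /dl' divr_gt0 // mulr_gt0.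
have [T1 HT1] := HD dl' dl'0.
set T := maxn T0 T1.
set M := rho * (B + dl') / (1 - rho).
have HM : rho * (B + dl') = M - rho * M by rewrite /M; field; rewrite gt_eqF.
have Hind : forall n, e (T + n)%N - M <= rho ^+ n * (e T - M).
  elim => [|n IH]; first by rewrite addn0 expr0 mul1r.
  rewrite addnS.
  have h1 := Hrec (T + n)%N (leq_trans (leq_maxl _ _) (leq_addr _ _)).
  have h2 := HT1 (T + n)%N (leq_trans (leq_maxr _ _) (leq_addr _ _)).
  have h3 : e (T + n).+1 - M <= rho * (e (T + n)%N - M).
    have := ler_wpM2l r0 h2; lra.
  apply: le_trans h3 _; rewrite exprS -mulrA; exact: ler_wpM2l.
set K := `|e T - M|.
have K1' : 0 < K + 1 by apply: ltr_wpDl; [exact: normr_ge0 | exact: ltr01].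
have K1 : 0 < dl / 2 / (K + 1) by apply: divr_gt0 => //; apply: divr_gt0.
have [N2 HN2] := geo_small r0 r1 K1.
exists (T + N2)%N => t Tt.
have tT : (T <= t)%N := leq_trans (leq_addr _ _) Tt.
rewrite -(subnKC tT).
have h := Hind (t - T)%N.
have hq : rho ^+ (t - T) <= dl / 2 / (K + 1).
  by apply: HN2; rewrite leq_subRL.
have hK : rho ^+ (t - T) * (e T - M) <= dl / 2.
  apply: le_trans (ler_wpM2l (exprn_ge0 _ r0) (ler_norm _)) _.
  apply: le_trans (ler_wpM2r (normr_ge0 _) hq) _.
  rewrite -/K.
  have K0 : 0 <= K by exact: normr_ge0.
  have -> : dl / 2 / (K + 1) * K = dl / 2 * (K / (K + 1)) by rewrite mulrAC mulrA.
  rewrite -[X in _ <= X]mulr1; apply: ler_wpM2l; first by rewrite divr_ge0 // ltW.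
  by rewrite ler_pdivrMr // mul1r lerDl.
have HMe : M <= eps + dl / 2.
  have : rho * B <= eps * (1 - rho) by lra.
  move=> h4.
  rewrite /M ler_pdivrMr // /dl'.
  have : rho * (dl * (1 - rho) / 2) <= dl / 2 * (1 - rho).
    have -> : rho * (dl * (1 - rho) / 2) = dl / 2 * (1 - rho) * rho by field.
    rewrite -[X in _ <= X]mulr1; apply: ler_wpM2l; last exact: ltW.
    by apply: mulr_ge0; [rewrite divr_ge0 // ltW | exact: ltW].
  lra.
lra.
Qed.
End Seq.
Lemma complexity_part (R : realType) (mu L C gamma eta : R) :
  0 < mu -> mu <= L -> 0 < C -> 0 < gamma -> gamma < 1 -> 0 < eta -> eta * mu < 1 ->
  exists K delta : R, 0 < delta /\
     forall eps : R, 0 < eps -> eps < delta ->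
       E_threshold mu L C gamma eta eps <= K * ln (1 / eps).
Proof.
move=> mu0 muL C0 ga0 ga1 eta0 etamu.
have L0 : 0 < L by apply: lt_le_trans muL.
set A := Cprime mu L C * (1 - gamma).
have A0 : 0 < A.
  rewrite /A /Cprime; apply: mulr_gt0; last by rewrite subr_gt0.
  apply: mulr_gt0; first by apply: ltr_wpDr; [exact: sqrtr_ge0|exact: ltr01].
  by apply: divr_gt0 => //; apply: mulr_gt0.
set l := ln (1 - eta * mu).
have l0 : l < 0 by apply: ln_lt0; rewrite subr_gt0 etamu /= ltrBlDr ltrDl mulr_gt0.
exists (2 / (- l)); exists (1 / (A + 1)); split.
  by rewrite divr_gt0 // addr_gt0.
move=> eps e0 ed.
have Ae : 0 < A + eps by rewrite addr_gt0.
have e1 : eps * (A + eps) <= 1.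
  have : eps * (A + 1) < 1 by rewrite -ltr_pdivlMr ?addr_gt0.
  have : eps < 1.
    apply: lt_le_trans ed _; rewrite ler_pdivrMr ?addr_gt0 // mul1r lerDr ltW //.
  nra.
have Hl : ln eps + ln (A + eps) <= 0.
  by rewrite -lnM ?posrE //; apply: ln_le0.
rewrite /E_threshold -/A -/l ln_div ?posrE // div1r lnV ?posrE //.
have -> : 2 / - l * - ln eps = (2 * ln eps) / l by field; rewrite lt_eqF.
rewrite ler_nM2r ?invr_lt0 //; lra.
Qed.

Unset Implicit Arguments.

Theorem proposition3 (R : realType) (d : nat) (mu L C gamma eta : R)
  (f : nat -> 'rV[R]_d -> R) :
  0 < mu -> mu <= L -> 0 < C -> 0 < gamma -> gamma < 1 ->
  (forall t, (1 <= t)%N -> forall x, differentiable (f t) x) ->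
  (forall t, (1 <= t)%N -> L_smooth L (f t)) ->
  (forall t, (1 <= t)%N -> strongly_convex mu (f t)) ->
  (forall t, (1 <= t)%N -> forall ws, is_minimizer (f t) ws -> enorm ws <= C) ->
  0 < eta -> eta <= 2 / (mu + L) -> eta * mu < 1 ->
  (forall (E : nat) (eps : R) (w wbar : nat -> 'rV[R]_d),
     (1 <= E)%N -> 0 < eps ->
     E_threshold mu L C gamma eta eps <= E%:R ->
     (forall t, w t.+1 = gd_steps eta (Favg gamma f t.+1) E (w t)) ->
     (forall t, (1 <= t)%N -> is_minimizer (Favg gamma f t) (wbar t)) ->
     (limn_esup (fun t => (enorm (w t - wbar t))%:E) <= eps%:E)%E)
  /\
  (exists K delta : R, 0 < delta /\
     forall eps : R, 0 < eps -> eps < delta ->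
       E_threshold mu L C gamma eta eps <= K * ln (1 / eps)).
Proof.
move=> mu0 muL C0 ga0 ga1 df Lf Sf Cf eta0 etaL etamu.
split; last exact: complexity_part.
move=> E eps w wbar E1 eps0 Hthr Hw Hwb.
have L0 : 0 < L by apply: lt_le_trans muL.
set Kc := L * (Num.sqrt (L / mu) * C + C) / mu.
have KcE : Cprime mu L C = Kc by rewrite /Cprime /Kc; field; rewrite gt_eqF.
have Kc0 : 0 < Kc.
  rewrite /Kc; apply: divr_gt0 => //; apply: mulr_gt0 => //.
  by apply: ltr_wpDl => //; apply: mulr_ge0; [exact: sqrtr_ge0|exact: ltW].
set B := Kc * (1 - gamma).
set rho := (1 - eta * mu) ^+ E.
have om0 : 0 < 1 - eta * mu by rewrite subr_gt0.
have om1 : 1 - eta * mu < 1 by rewrite ltrBlDr ltrDl mulr_gt0.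
have rho0 : 0 <= rho by apply: exprn_ge0; exact: ltW.
have rho1 : rho < 1 by rewrite exprn_ilt1 ?ltW // -lt0n.
have rho0' : 0 < rho by apply: exprn_gt0.
have Hrho : rho * (B + eps) <= eps.
  set l := ln (1 - eta * mu).
  have l0 : l < 0 by apply: ln_lt0; rewrite om0 om1.
  move: Hthr; rewrite /E_threshold KcE -/B -/l ler_ndivrMr // => H.
  have B0 : 0 < B + eps by rewrite addr_gt0 // mulr_gt0 // subr_gt0.
  have : ln rho <= ln (eps / (B + eps)).
    by rewrite /rho lnXn // -mulr_natl.
  rewrite ler_ln ?posrE ?divr_gt0 // ler_pdivlMr //.
set e := fun t => enorm (w t - wbar t).
set Dt := fun t => enorm (wbar t - wbar t.+1).
have Hrec : forall t, (1 <= t)%N -> e t.+1 <= rho * (e t + Dt t).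
  move=> t t1; rewrite /e /Dt Hw.
  have t1' : (1 <= t.+1)%N by [].
  have [dG _ LG SG] := Favg_props ga0 ga1 df Lf Sf t1'.
  apply: le_trans (gd_iter E (w t) mu0 muL eta0 etaL etamu dG LG SG (Hwb _ t1')) _.
  apply: ler_wpM2l => //; exact: enorm_tri.
have HD : forall dl, 0 < dl -> exists T, forall t, (T <= t)%N -> Dt t <= B + dl.
  move=> dl dl0.
  have q0 : 0 < dl / (Kc + dl) by rewrite divr_gt0 // addr_gt0.
  have [N HN] := geo_small (ltW ga0) ga1 q0.
  exists (maxn 1 N) => t Tt.
  have t1 : (1 <= t)%N := leq_trans (leq_maxl _ _) Tt.
  have := D_bound mu0 muL C0 ga0 ga1 df Lf Sf Cf t1 (Hwb _ t1) (Hwb _ (isT : (1 <= t.+1)%N)).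
  rewrite /om subnn expr0 mulr1 -/Kc -mulrA -/Kc => H.
  have gt := HN t.+1 (leq_trans (leq_maxr _ _) (leqW Tt)).
  have g1 := gt_pos ga0 ga1 (isT : (1 <= t.+1)%N).
  apply: le_trans H _.
  move: gt g1; set p := gamma ^+ t.+1 => gt g1.
  have p0 : 0 <= p by apply: exprn_ge0; exact: ltW.
  rewrite ler_pdivlMr ?addr_gt0 // in gt.
  have h5 : 0 <= gamma * Kc * p by apply: mulr_ge0 => //; apply: mulr_ge0; exact: ltW.
  rewrite mulrAC ler_pdivrMr // /B.
  lra.
have := seq_bound rho0 rho1 eps0 Hrec HD Hrho.
move=> Hfin.
apply/lee_addgt0Pr => dl dl0.
have [N HN] := Hfin dl dl0.
rewrite limn_esup_lim; apply: lime_le; first exact: is_cvg_esups.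
exists N => // n /= Nn.
apply: ub_ereal_sup => _ [k /= nk <-].
rewrite -EFinD lee_fin; apply: HN; exact: leq_trans Nn nk.
Qed.
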